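(* Let $p\in\mathbb R$ and consider the third order linear differential equation $$x^2R'''(x)+4xR''(x)+(2-4p^2+4x^2)R'(x)-\frac{4p^2}{x}R(x)=0.$$ It admits a unique formal solution of the form $R(x)=\frac1\pi+\frac1\pi\sum_{n\ge1}\pi^{n}d_n x^{-n}$. For this solution $d_{2n-1}=0$ for all $n\ge1$, and $d_{2n}=c_{2n}$ where $$c_2=-\frac{p^2}{2\pi^2},\qquad c_{2n}=-\frac{1}{\pi^{2n}}\frac{(2n-3)!!}{(2n)!!}\prod_{l=0}^{n-1}(p^2-l^2)\quad(n\ge2),$$ equivalently $c_{2n+2}=\frac{1}{\pi^2}\frac{2n-1}{2(n+1)}(p^2-n^2)c_{2n}$ for $n\ge1$. In particular $c_{2n}=0$ for integer $p\ge0$ and $n>p$.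
   Context: The function $R(x)=\frac1\pi\rho_{(1),\infty}(x/\pi;2,p,0)$ satisfies this differential equation, where $\rho_{(1),\infty}(x;\beta,p,q)=\lim_{N\to\infty}\frac{2\pi}{N}\rho_{(1),N}(-\pi\,\mathrm{sgn}(x)+2\pi x/N)$ is the bulk-scaled one-point density at the spectrum singularity of the generalised circular Jacobi $\beta$ ensemble (probability density on $(-\pi,\pi]^N$ proportional to $\prod_{l=1}^N e^{q\theta_l}|1+e^{i\theta_l}|^{\beta p}\prod_{j<k}|e^{i\theta_k}-e^{i\theta_j}|^\beta$, one-point density $\rho_{(1),N}$ integrating to $N$). The double factorial $(2n-3)!!$ is the product of odd integers up to $2n-3$ (with $1!!=1$), and $(2n)!!=2^n n!$. *)

(* Defs.v *)
From Stdlib Require Import Reals ZArith Lia Lra.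
Open Scope R_scope.

(* A formal series in powers of x is represented by its coefficient
   function a : Z -> R, where  a k  is the coefficient of x^(-k).
   (So R(x) = sum_k a k * x^(-k).)  All operations below are pointwise on
   coefficients (no infinite sums are involved). *)

(* formal d/dx :  d/dx x^(-(k-1)) = -(k-1) x^(-k) *)
Definition fderiv (a : Z -> R) : Z -> R :=
  fun k => - IZR (k - 1) * a (k - 1)%Z.

(* multiplication by x^m :  x^m * x^(-j) = x^(-(j-m)) *)
Definition fmulx (m : Z) (a : Z -> R) : Z -> R :=
  fun k => a (k + m)%Z.

Definition ode_lhs (p : R) (a : Z -> R) : Z -> R :=
  fun k =>
    fmulx 2 (fderiv (fderiv (fderiv a))) k
    + 4 * fmulx 1 (fderiv (fderiv a)) k
    + (2 - 4 * p ^ 2) * fderiv a k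
    + 4 * fmulx 2 (fderiv a) k
    - 4 * p ^ 2 * fmulx (-1) a k.

Definition is_formal_solution (p : R) (a : Z -> R) : Prop :=
  forall k : Z, ode_lhs p a k = 0.

(* The formal series  1/pi + (1/pi) * sum_{n>=1} pi^n d_n x^(-n).
   (d 0 is not used.) *)
Definition series_of (d : nat -> R) : Z -> R :=
  fun k =>
    match k with
    | Z0 => 1 / PI
    | Zpos q => (1 / PI) * PI ^ (Pos.to_nat q) * d (Pos.to_nat q)
    | Zneg _ => 0
    end.

Fixpoint dfact (n : nat) : nat :=
  match n with
  | O => 1
  | S O => 1
  | S (S m as n') => (S n') * dfact m
  end%nat.

Fixpoint prod_pl (p : R) (n : nat) : R :=
  match n with
  | O => 1
  | S m => prod_pl p m * (p ^ 2 - (INR m) ^ 2)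
  end.

(* c_{2n} (meaningful for n >= 1) *)
Definition c2n (p : R) (n : nat) : R :=
  if Nat.eqb n 1 then - p ^ 2 / (2 * PI ^ 2)
  else - (1 / PI ^ (2 * n)) * (INR (dfact (2 * n - 3)) / INR (dfact (2 * n)))
         * prod_pl p n.

(* Main.v *)
Require Import Defs.
From Stdlib Require Import Reals ZArith Lia Lra.
Open Scope R_scope.

Lemma ode_lhs_eq p a k : ode_lhs p a k =
  -4 * IZR (k+1) * a (k+1)%Z - IZR (k-2) * (IZR (k-1) ^ 2 - 4 * p ^ 2) * a (k-1)%Z.
Proof.
  unfold ode_lhs, fmulx, fderiv.
  replace (k+2-1-1-1)%Z with (k-1)%Z by ring.
  replace (k+1-1-1)%Z with (k-1)%Z by ring.
  replace (k+2-1)%Z with (k+1)%Z by ring.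
  replace (k + (-1))%Z with (k-1)%Z by ring.
  replace (k+1-1)%Z with k by ring.
  repeat rewrite minus_IZR; repeat rewrite plus_IZR. simpl. ring.
Qed.

Lemma ser_neg d k : (k < 0)%Z -> series_of d k = 0.
Proof. destruct k; simpl; auto; lia. Qed.

Lemma ser_S d m : series_of d (Z.of_nat (S m)) = 1 / PI * PI ^ (S m) * d (S m).
Proof. simpl. rewrite SuccNat2Pos.id_succ. reflexivity. Qed.

Lemma ser_0 d : series_of d 0%Z = 1 / PI.
Proof. reflexivity. Qed.

Definition F p (m : nat) : R :=
  -(INR m - 1)*(INR m ^2 - 4*p^2)/(4*(INR m + 2)*PI^2).

Lemma PIn0 : PI <> 0.
Proof. generalize PI_RGT_0; lra. Qed.

Lemma sol_rec p d : is_formal_solution p (series_of d) ->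
  d 1%nat = 0 /\ d 2%nat = -p^2/(2*PI^2) /\
  forall n, (1<=n)%nat -> d (S (S n)) = F p n * d n.
Proof.
  intros H. pose proof PIn0 as HP.
  split; [|split].
  - pose proof (H 0%Z) as H0. rewrite ode_lhs_eq in H0.
    replace (0+1)%Z with (Z.of_nat 1) in H0 by reflexivity.
    rewrite ser_S, ser_neg in H0 by lia. simpl in H0.
    field_simplify in H0; auto. lra.
  - pose proof (H 1%Z) as H0. rewrite ode_lhs_eq in H0.
    replace (1+1)%Z with (Z.of_nat 2) in H0 by reflexivity.
    replace (1-1)%Z with 0%Z in H0 by reflexivity.
    rewrite ser_S, ser_0 in H0. simpl in H0.
    field_simplify in H0; auto.
    assert (E : -8 * PI ^ 2 * d 2%nat - 4 * p ^ 2 = 0).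
    { match type of H0 with ?X / PI = 0 => replace X with (X/PI*PI) by (field; auto) end.
      rewrite H0; ring. }
    assert (PI^2<>0) by (apply pow_nonzero; auto).
    replace (d 2%nat) with ((-8 * PI ^ 2 * d 2%nat - 4 * p ^ 2 + 4*p^2)/(-8*PI^2)) by (field; auto).
    rewrite E. field; auto.
  - intros n Hn. destruct n as [|m]; [lia|].
    pose proof (H (Z.of_nat (S (S m)))) as H0. rewrite ode_lhs_eq in H0.
    replace (Z.of_nat (S (S m)) + 1)%Z with (Z.of_nat (S (S (S m)))) in H0 by lia.
    replace (Z.of_nat (S (S m)) - 1)%Z with (Z.of_nat (S m)) in H0 by lia.
    replace (Z.of_nat (S (S m)) - 2)%Z with (Z.of_nat m) in H0 by lia.
    rewrite !ser_S in H0. rewrite <- !INR_IZR_INZ in H0.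
    unfold F. rewrite !S_INR in *. simpl pow in H0.
    pose proof (pos_INR m).
    assert (PI ^ m <> 0) by (apply pow_nonzero; auto).
    assert (HP2 : PI^2 <> 0) by (apply pow_nonzero; auto).
    assert (Hm : INR m + 1 + 2 <> 0) by lra.
    set (X := d (S (S (S m)))) in *. set (Y := d (S m)) in *.
    assert (E : -4 * (INR m + 3) * PI^2 * X - INR m * ((INR m + 1)^2 - 4*p^2) * Y = 0).
    { match type of H0 with ?L = 0 => replace (-4 * (INR m + 3) * PI^2 * X - INR m * ((INR m + 1)^2 - 4*p^2) * Y) with (L / PI^m) by (field; auto) end.
      rewrite H0. field; auto. }
    replace X with ((-4 * (INR m + 3) * PI^2 * X - INR m * ((INR m + 1)^2 - 4*p^2) * Y
       + INR m * ((INR m + 1)^2 - 4*p^2) * Y) / (-4 * (INR m + 3) * PI^2)) by (field; split; auto; lra).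
    rewrite E. field. split; auto.
Qed.

Lemma dfact_SS k : dfact (S (S k)) = (S (S k) * dfact k)%nat.
Proof. reflexivity. Qed.

Lemma dfact_pos k : (0 < dfact k)%nat.
Proof.
  assert (forall k, (0 < dfact k)%nat /\ (0 < dfact (S k))%nat).
  { induction k0; [simpl; lia|]. destruct IHk0; split; auto.
    rewrite dfact_SS. lia. }
  apply H.
Qed.

Lemma dfactR k : INR (dfact k) <> 0.
Proof. apply not_0_INR. pose proof (dfact_pos k). lia. Qed.

Lemma c2n_rec p n : (1 <= n)%nat ->
  c2n p (S n) = 1 / PI ^ 2 * ((2 * INR n - 1) / (2 * (INR n + 1)))
                    * (p ^ 2 - INR n ^ 2) * c2n p n.
Proof.
  intros Hn. pose proof PIn0 as HP.
  destruct n as [|[|m]]; [lia| |].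
  - unfold c2n. simpl. field. auto.
  - unfold c2n.
    replace (Nat.eqb (S (S (S m))) 1) with false by reflexivity.
    replace (Nat.eqb (S (S m)) 1) with false by reflexivity.
    replace (2 * S (S (S m)) - 3)%nat with (S (S (2*m+1))) by lia.
    replace (2 * S (S m) - 3)%nat with (2*m+1)%nat by lia.
    replace (PI ^ (2 * S (S (S m)))) with (PI^2 * PI ^ (2 * S (S m))) by (rewrite <- pow_add; f_equal; lia).
    replace (2 * S (S (S m)))%nat with (S (S (2 * S (S m)))) by lia.
    rewrite !dfact_SS.
    replace (prod_pl p (S (S (S m)))) with (prod_pl p (S (S m)) * (p^2 - INR (S (S m))^2)) by reflexivity.

    pose proof (dfactR (2*m+1)). pose proof (dfactR (2 * S (S m))).
    assert (PI ^ (2 * S (S m)) <> 0) by (apply pow_nonzero; auto).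
    rewrite !mult_INR. rewrite !S_INR, !plus_INR, !mult_INR, !S_INR. simpl INR.
    pose proof (pos_INR m).
    field. repeat split; auto; lra.
Qed.

Lemma prod_zero k n : (k < n)%nat -> prod_pl (INR k) n = 0.
Proof.
  induction n; intros H; [lia|].
  simpl. destruct (Nat.eq_dec k n).
  - subst. ring.
  - rewrite IHn by lia. ring.
Qed.

Lemma c2n_zero k n : (k < n)%nat -> c2n (INR k) n = 0.
Proof.
  intros H. unfold c2n. destruct (Nat.eqb n 1) eqn:E.
  - apply Nat.eqb_eq in E. subst. assert (k = 0%nat) by lia. subst. simpl. field. apply PIn0.
  - rewrite prod_zero by auto. ring.
Qed.

Lemma desc p d : is_formal_solution p (series_of d) ->
      (forall n : nat, (1 <= n)%nat -> d (2 * n - 1)%nat = 0) /\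
      (forall n : nat, (1 <= n)%nat -> d (2 * n)%nat = c2n p n).
Proof.
  intros H. destruct (sol_rec p d H) as [H1 [H2 H3]]. pose proof PIn0 as HP.
  split.
  - induction n as [|n IH]; intros Hn; [lia|].
    destruct n as [|j]; [exact H1|].
    replace (2 * S (S j) - 1)%nat with (S (S (2 * S j - 1))) by lia.
    rewrite H3 by lia. rewrite IH by lia. ring.
  - induction n as [|n IH]; intros Hn; [lia|].
    destruct n as [|j].
    + simpl. rewrite H2. unfold c2n. simpl. reflexivity.
    + replace (2 * S (S j))%nat with (S (S (2 * S j))) by lia.
      rewrite H3 by lia. rewrite IH by lia. rewrite (c2n_rec p (S j)) by lia.
      unfold F. rewrite mult_INR. simpl (INR 2).
      pose proof (pos_INR (S j)).
      field. repeat split; auto; try lra.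
Qed.

Fixpoint dd p n := match n with
  | O => 0 | S O => 0
  | S (S m) => match m with O => -p^2/(2*PI^2) | S _ => F p m * dd p m end end.

Lemma exist_sol p : is_formal_solution p (series_of (dd p)).
Proof.
  intros k. pose proof PIn0 as HP. rewrite ode_lhs_eq.
  destruct (Z_lt_le_dec k 0) as [Hk|Hk].
  - destruct (Z.eq_dec k (-1)) as [->|Hk1].
    + rewrite (ser_neg (dd p) (-1-1)) by lia. simpl. ring.
    + rewrite !ser_neg by lia. ring.
  - destruct (Z_of_nat_complete k Hk) as [m ->].
    destruct m as [|[|j]].
    + rewrite (ser_neg (dd p) (Z.of_nat 0 - 1)) by lia.
      replace (Z.of_nat 0 + 1)%Z with (Z.of_nat 1) by reflexivity.
      rewrite ser_S. simpl. ring.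
    + replace (Z.of_nat 1 + 1)%Z with (Z.of_nat 2) by reflexivity.
      replace (Z.of_nat 1 - 1)%Z with 0%Z by reflexivity.
      rewrite ser_S, ser_0. simpl. field. auto.
    + replace (Z.of_nat (S (S j)) + 1)%Z with (Z.of_nat (S (S (S j)))) by lia.
      replace (Z.of_nat (S (S j)) - 1)%Z with (Z.of_nat (S j)) by lia.
      replace (Z.of_nat (S (S j)) - 2)%Z with (Z.of_nat j) by lia.
      rewrite !ser_S. rewrite <- !INR_IZR_INZ.
      replace (dd p (S (S (S j)))) with (F p (S j) * dd p (S j)) by reflexivity.
      unfold F. rewrite !S_INR. pose proof (pos_INR j).
      assert (PI ^ j <> 0) by (apply pow_nonzero; auto).
      simpl pow. field. split; auto; lra.
Qed.

Theorem proposition2p4 (p : R) :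
  (exists d : nat -> R, is_formal_solution p (series_of d)) /\
  (forall d d' : nat -> R,
      is_formal_solution p (series_of d) -> is_formal_solution p (series_of d') ->
      forall n : nat, (1 <= n)%nat -> d n = d' n) /\
  (forall d : nat -> R, is_formal_solution p (series_of d) ->
      (forall n : nat, (1 <= n)%nat -> d (2 * n - 1)%nat = 0) /\
      (forall n : nat, (1 <= n)%nat -> d (2 * n)%nat = c2n p n)) /\
  (forall n : nat, (1 <= n)%nat ->
      c2n p (S n) = 1 / PI ^ 2 * ((2 * INR n - 1) / (2 * (INR n + 1)))
                    * (p ^ 2 - INR n ^ 2) * c2n p n) /\
  (forall k : nat, p = INR k -> forall n : nat, (k < n)%nat -> c2n p n = 0).
Proof.
  split; [exists (dd p); apply exist_sol|].
  split; [|split; [apply desc|split; [apply c2n_rec|]]].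
  - intros d d' H H' n Hn.
    destruct (desc p d H) as [A B]. destruct (desc p d' H') as [A' B'].
    destruct (Nat.Even_or_Odd n) as [[m Hm]|[m Hm]]; subst.
    + rewrite B, B' by lia. reflexivity.
    + replace (2*m+1)%nat with (2 * S m - 1)%nat by lia.
      rewrite A, A' by lia. reflexivity.
  - intros k -> n Hn. apply c2n_zero; auto.
Qed.
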